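(* An effect algebra $A$ is (the effect algebra of) a Boolean algebra if and only if the category $\int R(A)$ is filtered.
   Context: An effect algebra is a partial algebra $(A;+,0,1)$, with a binary partial operation $+$ and constants $0,1$, satisfying: (E1) if $a+b$ is defined, then $b+a$ is defined and $a+b=b+a$; (E2) if $a+b$ and $(a+b)+c$ are defined, then $b+c$ and $a+(b+c)$ are defined and $(a+b)+c=a+(b+c)$; (E3) for every $a$ there is a unique $a^\perp$ such that $a+a^\perp=1$; (E4) if $a+1$ is defined, then $a=0$. One-element effect algebras are allowed. Morphisms of effect algebras preserve $1$ and defined sums. Every Boolean algebra is an effect algebra via: $x+y$ is defined iff $x\wedge y=0$, and then $x+y=x\vee y$. ''$A$ is a Boolean algebra'' means $A$ arises this way from a Boolean algebra. For $[n]=\{1,\dots,n\}$, $\mathbf{FinBool}$ is the full subcategory of Boolean algebras on the objects $2^{[n]}$, $n\in\mathbb N$. The category $\int R(A)$ has: - objects: pairs $(2^{[n]},g)$ with $g\colon 2^{[n]}\to A$ an effect-algebra morphism; - arrows $(2^{[n]},g)\to(2^{[n']},g')$: Boolean algebra morphisms $f\colon 2^{[n]}\to 2^{[n']}$ with $g'\circ f=g$. A category is filtered if it satisfies all three of: - it is nonempty; - every two objects admit a cospan $X_1\to X\leftarrow X_2$; - every parallel pair $f_1,f_2\colon X\to Y$ admits $q\colon Y\to Z$ with $q\circ f_1=q\circ f_2$. *)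

(* Defs.v *)
(* finite Boolean algebras 2^[n] are rendered as {set 'I_n}. *)
From mathcomp Require Import all_boot.
Set Implicit Arguments.
Unset Strict Implicit.
Unset Printing Implicit Defensive.

(* Effect algebras: partial sum encoded as an option-valued operation;
   [ea_sum a b = Some c] means "a+b is defined and equals c". *)
Record EffectAlgebra := {
  ea_carrier :> Type;
  ea_sum : ea_carrier -> ea_carrier -> option ea_carrier;
  ea_zero : ea_carrier;
  ea_one : ea_carrier;
  ea_comm : forall a b c, ea_sum a b = Some c -> ea_sum b a = Some c;
  ea_assoc : forall a b c ab abc, ea_sum a b = Some ab -> ea_sum ab c = Some abc ->
     exists bc, ea_sum b c = Some bc /\ ea_sum a bc = Some abc;
  ea_orthosupp : forall a, exists! b, ea_sum a b = Some ea_one;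
  ea_zeroone : forall a c, ea_sum a ea_one = Some c -> a = ea_zero
}.

Definition is_boolean_algebra (T : Type) (meet join : T -> T -> T) (compl : T -> T)
    (bot top : T) : Prop :=
  (forall x y, meet x y = meet y x) /\
  (forall x y, join x y = join y x) /\
  (forall x y z, meet x (meet y z) = meet (meet x y) z) /\
  (forall x y z, join x (join y z) = join (join x y) z) /\
  (forall x y, meet x (join x y) = x) /\
  (forall x y, join x (meet x y) = x) /\
  (forall x y z, meet x (join y z) = join (meet x y) (meet x z)) /\
  (forall x, join x bot = x) /\
  (forall x, meet x top = x) /\
  (forall x, meet x (compl x) = bot) /\
  (forall x, join x (compl x) = top).

Definition is_Boolean (A : EffectAlgebra) : Prop :=
  exists (meet join : A -> A -> A) (compl : A -> A),
    is_boolean_algebra meet join compl (ea_zero A) (ea_one A) /\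
    (forall x y z, ea_sum x y = Some z <-> (meet x y = ea_zero A /\ z = join x y)).

Definition ea_morph (A : EffectAlgebra) (n : nat) (g : {set 'I_n} -> A) : Prop :=
  g setT = ea_one A /\
  (forall X Y : {set 'I_n}, X :&: Y = set0 -> ea_sum (g X) (g Y) = Some (g (X :|: Y))).

Definition bool_morph (n m : nat) (f : {set 'I_n} -> {set 'I_m}) : Prop :=
  (forall X Y, f (X :&: Y) = f X :&: f Y) /\
  (forall X Y, f (X :|: Y) = f X :|: f Y) /\
  (forall X, f (~: X) = ~: f X) /\
  f set0 = set0 /\ f setT = setT.

(* Objects of the category \int R(A). *)
Record RObj (A : EffectAlgebra) := {
  ro_n : nat;
  ro_g : {set 'I_ro_n} -> A;
  ro_morph : ea_morph ro_g
}.

Definition is_arrow (A : EffectAlgebra) (X Y : RObj A)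
    (f : {set 'I_(ro_n X)} -> {set 'I_(ro_n Y)}) : Prop :=
  bool_morph f /\ (forall S, @ro_g A Y (f S) = @ro_g A X S).

Arguments is_arrow {A} X Y f.

Definition intR_filtered (A : EffectAlgebra) : Prop :=
  (exists X : RObj A, True) /\
  (forall X1 X2 : RObj A, exists (X : RObj A) f1 f2,
      is_arrow X1 X f1 /\ is_arrow X2 X f2) /\
  (forall (X Y : RObj A) f1 f2, is_arrow X Y f1 -> is_arrow X Y f2 ->
      exists (Z : RObj A) q, is_arrow Y Z q /\ (forall S, q (f1 S) = q (f2 S))).

(* Main.v *)
Require Import Defs.
From mathcomp Require Import all_boot.
From Stdlib Require Import ClassicalEpsilon.

Set Implicit Arguments.
Unset Strict Implicit.
Unset Printing Implicit Defensive.

Section EA.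
Variable A : EffectAlgebra.
Local Notation sum := (@ea_sum A).
Local Notation z0 := (ea_zero A).
Local Notation o1 := (ea_one A).

Lemma perp_uniq a b c : sum a b = Some o1 -> sum a c = Some o1 -> b = c.
Proof.
have [b0 [_ U]] := ea_orthosupp a => Hb Hc.
by rewrite -(U b Hb) (U c Hc).
Qed.

Lemma sum1_0 : sum o1 z0 = Some o1.
Proof.
have [b [Hb _]] := ea_orthosupp o1.
by have := ea_zeroone (ea_comm Hb) => Hb0; rewrite Hb0 in Hb.
Qed.

Lemma sumx0 a : sum a z0 = Some a.
Proof.
have aux : forall x y, sum x y = Some o1 -> sum y z0 = Some y.
  move=> x y H; have [bc [H1 H2]] := ea_assoc H sum1_0.
  by rewrite H1 -(perp_uniq H H2).
have [b [Hb _]] := ea_orthosupp a; exact: aux b a (ea_comm Hb).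
Qed.

Lemma sum0x a : sum z0 a = Some a.
Proof. exact: ea_comm (sumx0 a). Qed.

Lemma morph0 n (g : {set 'I_n} -> A) : ea_morph g -> g set0 = z0.
Proof.
case=> H1 H2; have := H2 set0 setT (set0I _).
by rewrite set0U H1 => /ea_zeroone.
Qed.

Lemma morphC n (g : {set 'I_n} -> A) : ea_morph g -> forall X, sum (g X) (g (~: X)) = Some o1.
Proof. by case=> H1 H2 X; rewrite H2 ?setICr // setUCr H1. Qed.

Lemma preim_morph n m (phi : 'I_m -> 'I_n) : bool_morph (fun P => [set j | phi j \in P]).
Proof.
split; [move=> X Y|split; [move=> X Y|split; [move=> X|split]]];
  by apply/setP=> j; rewrite !inE.
Qed.

Lemma comp_arrow (X Y Z : RObj A) f h : is_arrow X Y f -> is_arrow Y Z h ->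
  is_arrow X Z (fun S => h (f S)).
Proof.
move=> [[f1 [f2 [f3 [f4 f5]]]] Hf] [[h1 [h2 [h3 [h4 h5]]]] Hh]; split.
  by split; [move=> ??|split; [move=> ??|split; [move=> ?|split]]];
    rewrite ?f1 ?f2 ?f3 ?f4 ?f5 ?h1 ?h2 ?h3 ?h4 ?h5.
by move=> S; rewrite Hh Hf.
Qed.

Lemma arrow_g (X Y : RObj A) f S : is_arrow X Y f -> ro_g (f S) = ro_g S.
Proof. by case=> _ ->. Qed.

Definition val2 (x0 x1 : bool) (a a' : A) :=
  if x0 then (if x1 then o1 else a) else (if x1 then a' else z0).

Definition g2 (a a' : A) (P : {set 'I_2}) := val2 (ord0 \in P) (ord_max \in P) a a'.

Lemma g2_morph a a' : sum a a' = Some o1 -> ea_morph (g2 a a').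
Proof.
move=> H; split; first by rewrite /g2 !inE.
move=> X Y HXY.
have h0 : ~~ ((ord0 \in X) && (ord0 \in Y)) by rewrite -in_setI HXY inE.
have h1 : ~~ ((ord_max \in X) && (ord_max \in Y)) by rewrite -in_setI HXY inE.
rewrite /g2 !in_setU; move: h0 h1.
case: (ord0 \in X); case: (ord0 \in Y); case: (ord_max \in X); case: (ord_max \in Y)
  => //= _ _; rewrite /val2;
  solve [ exact: sumx0 | exact: sum0x | exact: H | exact: ea_comm H ].
Qed.

Definition obj2 a a' (H : sum a a' = Some o1) : RObj A :=
  @Build_RObj A 2 (g2 a a') (g2_morph H).

Lemma arrow2 (W : RObj A) (S : {set 'I_(ro_n W)}) (P : {set 'I_2}) :
  ro_g ([set j | (if j \in S then ord0 else ord_max) \in P] : {set 'I_(ro_n W)})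
  = val2 (ord0 \in P) (ord_max \in P) (ro_g S) (ro_g (~: S)).
Proof.
have [M1 M2] := ro_morph W.
case h0 : (ord0 \in P); case h1 : (ord_max \in P); rewrite /val2.
- have -> : [set j | (if j \in S then ord0 else ord_max) \in P] = setT.
    by apply/setP=> j; rewrite !inE; case: (j \in S).
  by [].
- have -> : [set j | (if j \in S then ord0 else ord_max) \in P] = S.
    by apply/setP=> j; rewrite !inE; case: (j \in S).
  by [].
- have -> : [set j | (if j \in S then ord0 else ord_max) \in P] = ~: S.
    by apply/setP=> j; rewrite !inE; case: (j \in S).
  by [].
- have -> : [set j | (if j \in S then ord0 else ord_max) \in P] = set0.
    by apply/setP=> j; rewrite !inE; case: (j \in S).
  exact: morph0 (ro_morph W).
Qed.

Lemma rep1 x : exists (W : RObj A) (U : {set 'I_(ro_n W)}), ro_g U = x.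
Proof.
have [x' [Hx _]] := ea_orthosupp x.
exists (obj2 Hx), [set ord0]; by rewrite /= /g2 !inE.
Qed.

Lemma nonempty : exists X : RObj A, True.
Proof. by have [W _] := rep1 z0; exists W. Qed.

Section Filt.
Variable F : intR_filtered A.

Lemma equalize (W : RObj A) S T : ro_g S = ro_g T ->
  exists (Z : RObj A) q, is_arrow W Z q /\ q S = q T.
Proof.
move=> E.
have HS := morphC (ro_morph W) S.
have HT := morphC (ro_morph W) T.
rewrite -E in HT; have ET := perp_uniq HS HT.
set fS := fun P : {set 'I_2} => [set j | (if j \in S then ord0 else ord_max) \in P].
set fT := fun P : {set 'I_2} => [set j | (if j \in T then ord0 else ord_max) \in P].
have aS : is_arrow (obj2 HS) W fS.
  by split; [exact: preim_morph | move=> P; rewrite /fS arrow2].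
have aT : is_arrow (obj2 HS) W fT.
  by split; [exact: preim_morph | move=> P; rewrite /fT arrow2 -E -ET].
have [_ [_ F3]] := F.
have [Z [q [Aq Hq]]] := F3 _ _ _ _ aS aT.
exists Z, q; split => //.
have := Hq [set ord0].
have -> : fS [set ord0] = S.
  by apply/setP=> j; rewrite /fS !inE; case: (j \in S).
have -> : fT [set ord0] = T.
  by apply/setP=> j; rewrite /fT !inE; case: (j \in T).
by [].
Qed.

Lemma WD2 (Y1 Y2 : RObj A) U1 V1 U2 V2 :
  ro_g U1 = ro_g U2 -> ro_g V1 = ro_g V2 ->
  exists (Z : RObj A) h1 h2, is_arrow Y1 Z h1 /\ is_arrow Y2 Z h2 /\
    h1 U1 = h2 U2 /\ h1 V1 = h2 V2.
Proof.
move=> EU EV.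
have [_ [F2 _]] := F.
have [W [f1 [f2 [A1 A2]]]] := F2 Y1 Y2.
have [Z [q [Aq Hq]]] : exists (Z : RObj A) q, is_arrow W Z q /\ q (f1 U1) = q (f2 U2).
  by apply: equalize; rewrite (arrow_g _ A1) (arrow_g _ A2).
have [Z' [q' [Aq' Hq']]] : exists (Z' : RObj A) q', is_arrow Z Z' q' /\
    q' (q (f1 V1)) = q' (q (f2 V2)).
  apply: equalize.
  by rewrite (arrow_g _ Aq) (arrow_g _ Aq) (arrow_g _ A1) (arrow_g _ A2).
exists Z', (fun S => q' (q (f1 S))), (fun S => q' (q (f2 S))).
split; first by apply: comp_arrow (comp_arrow A1 Aq) Aq'.
split; first by apply: comp_arrow (comp_arrow A2 Aq) Aq'.
by rewrite Hq.
Qed.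

Lemma rep3 x y z : exists (W : RObj A) (U V T : {set 'I_(ro_n W)}),
  ro_g U = x /\ ro_g V = y /\ ro_g T = z.
Proof.
have [_ [F2 _]] := F.
have [W1 [U1 H1]] := rep1 x.
have [W2 [U2 H2]] := rep1 y.
have [W3 [U3 H3]] := rep1 z.
have [W [f1 [f2 [A1 A2]]]] := F2 W1 W2.
have [W' [f [f3 [A0 A3]]]] := F2 W W3.
exists W', (f (f1 U1)), (f (f2 U2)), (f3 U3).
by rewrite !(arrow_g _ A0) (arrow_g _ A1) (arrow_g _ A2) (arrow_g _ A3).
Qed.


Lemma meet_ex x y : exists c, forall (W : RObj A) (U V : {set 'I_(ro_n W)}),
  ro_g U = x -> ro_g V = y -> ro_g (U :&: V) = c.
Proof.
have [W0 [U0 [V0 [_ [H1 [H2 _]]]]]] := rep3 x y y.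
exists (ro_g (U0 :&: V0)) => W U V HU HV.
have [Z [h1 [h2 [A1 [A2 [E1 E2]]]]]] := WD2 (Y1:=W) (Y2:=W0) (U1:=U) (V1:=V)
   (U2:=U0) (V2:=V0) (etrans HU (esym H1)) (etrans HV (esym H2)).
rewrite -(arrow_g _ A1) -(arrow_g (U0 :&: V0) A2).
by case: A1 => [[-> _] _]; case: A2 => [[-> _] _]; rewrite E1 E2.
Qed.

Lemma join_ex x y : exists c, forall (W : RObj A) (U V : {set 'I_(ro_n W)}),
  ro_g U = x -> ro_g V = y -> ro_g (U :|: V) = c.
Proof.
have [W0 [U0 [V0 [_ [H1 [H2 _]]]]]] := rep3 x y y.
exists (ro_g (U0 :|: V0)) => W U V HU HV.
have [Z [h1 [h2 [A1 [A2 [E1 E2]]]]]] := WD2 (Y1:=W) (Y2:=W0) (U1:=U) (V1:=V)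
   (U2:=U0) (V2:=V0) (etrans HU (esym H1)) (etrans HV (esym H2)).
rewrite -(arrow_g _ A1) -(arrow_g (U0 :|: V0) A2).
by case: A1 => [[_ [-> _]] _]; case: A2 => [[_ [-> _]] _]; rewrite E1 E2.
Qed.

End Filt.

Lemma compl_ex x : exists c, forall (W : RObj A) (U : {set 'I_(ro_n W)}),
  ro_g U = x -> ro_g (~: U) = c.
Proof.
have [x' [Hx _]] := ea_orthosupp x.
exists x' => W U HU; have := morphC (ro_morph W) U; rewrite HU => H.
exact: perp_uniq H Hx.
Qed.

Definition meetE F x y := proj1_sig (constructive_indefinite_description _ (meet_ex F x y)).
Definition joinE F x y := proj1_sig (constructive_indefinite_description _ (join_ex F x y)).
Definition complE x := proj1_sig (constructive_indefinite_description _ (compl_ex x)).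

Lemma meetP F (W : RObj A) (U V : {set 'I_(ro_n W)}) x y :
  ro_g U = x -> ro_g V = y -> meetE F x y = ro_g (U :&: V).
Proof.
move=> HU HV; rewrite /meetE; case: constructive_indefinite_description => c Hc /=.
by rewrite (Hc W U V HU HV).
Qed.

Lemma joinP F (W : RObj A) (U V : {set 'I_(ro_n W)}) x y :
  ro_g U = x -> ro_g V = y -> joinE F x y = ro_g (U :|: V).
Proof.
move=> HU HV; rewrite /joinE; case: constructive_indefinite_description => c Hc /=.
by rewrite (Hc W U V HU HV).
Qed.

Lemma complP (W : RObj A) (U : {set 'I_(ro_n W)}) x :
  ro_g U = x -> complE x = ro_g (~: U).
Proof.
move=> HU; rewrite /complE; case: constructive_indefinite_description => c Hc /=.
by rewrite (Hc W U HU).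
Qed.

Section Obj3.
Variables (a b c c' d e : A).
Hypotheses (Hab : sum a b = Some c) (Hc : sum c c' = Some o1) (Hd1 : sum b c' = Some d)
  (Hd2 : sum a d = Some o1) (He1 : sum a c' = Some e) (He2 : sum b e = Some o1).

Definition val3 (x0 x1 x2 : bool) : A :=
  match x0, x1, x2 with
  | false, false, false => z0
  | true, false, false => a
  | false, true, false => b
  | false, false, true => c'
  | true, true, false => c
  | true, false, true => e
  | false, true, true => d
  | true, true, true => o1
  end.

Definition i1 : 'I_3 := @Ordinal 3 1 isT.
Definition g3 (P : {set 'I_3}) := val3 (ord0 \in P) (i1 \in P) (ord_max \in P).

Lemma g3_morph : ea_morph g3.
Proof.
split; first by rewrite /g3 !inE.
move=> X Y HXY.
have h0 : ~~ ((ord0 \in X) && (ord0 \in Y)) by rewrite -in_setI HXY inE.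
have h1 : ~~ ((i1 \in X) && (i1 \in Y)) by rewrite -in_setI HXY inE.
have h2 : ~~ ((ord_max \in X) && (ord_max \in Y)) by rewrite -in_setI HXY inE.
rewrite /g3 !in_setU; move: h0 h1 h2.
case: (ord0 \in X); case: (ord0 \in Y); case: (i1 \in X); case: (i1 \in Y);
  case: (ord_max \in X); case: (ord_max \in Y) => //= _ _ _;
  solve [ exact: sumx0 | exact: sum0x | assumption | apply: ea_comm; assumption ].
Qed.

End Obj3.

Lemma sum_rep x y z : sum x y = Some z ->
  exists (W : RObj A) (U V : {set 'I_(ro_n W)}),
  U :&: V = set0 /\ ro_g U = x /\ ro_g V = y /\ ro_g (U :|: V) = z.
Proof.
move=> Hab.
have [z' [Hc _]] := ea_orthosupp z.
have [d [Hd1 Hd2]] := ea_assoc Hab Hc.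
have [e [He1 He2]] := ea_assoc (ea_comm Hab) Hc.
exists (@Build_RObj A 3 _ (g3_morph Hab Hc Hd1 Hd2 He1 He2)), [set ord0], [set i1].
split; first by apply/setP=> j; rewrite !inE; apply/negP => /andP [/eqP -> /eqP].
by rewrite /= /g3 !inE.
Qed.

Lemma filt_bool (F : intR_filtered A) : is_Boolean A.
Proof.
exists (meetE F), (joinE F), complE; split.
  split; [move=> x y|split; [move=> x y|split; [move=> x y z|split; [move=> x y z|
    split; [move=> x y|split; [move=> x y|split; [move=> x y z|split; [move=> x|
    split; [move=> x|split; [move=> x|move=> x]]]]]]]]]];
  first [ have [W [U [V [T [HU [HV HT]]]]]] := rep3 F x y z
        | have [W [U [V [T [HU [HV HT]]]]]] := rep3 F x y y
        | have [W [U [V [T [HU [HV HT]]]]]] := rep3 F x x x ].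
  - by rewrite (meetP F HU HV) (meetP F HV HU) setIC.
  - by rewrite (joinP F HU HV) (joinP F HV HU) setUC.
  - by rewrite (meetP F HV HT) (meetP F HU (erefl _)) (meetP F HU HV) (meetP F (erefl _) HT) setIA.
  - by rewrite (joinP F HV HT) (joinP F HU (erefl _)) (joinP F HU HV) (joinP F (erefl _) HT) setUA.
  - rewrite (joinP F HU HV) (meetP F HU (erefl _)) -HU; congr ro_g.
    by apply/setP=> j; rewrite !inE; case: (j \in U).
  - rewrite (meetP F HU HV) (joinP F HU (erefl _)) -HU; congr ro_g.
    by apply/setP=> j; rewrite !inE; case: (j \in U).
  - by rewrite (joinP F HV HT) (meetP F HU (erefl _)) (meetP F HU HV) (meetP F HU HT)
      (joinP F (erefl _) (erefl _)) setIUr.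
  - by rewrite -(morph0 (ro_morph W)) (joinP F HU (erefl _)) setU0.
  - by rewrite -(ro_morph W).1 (meetP F HU (erefl _)) setIT.
  - by rewrite (complP HU) (meetP F HU (erefl _)) setICr (morph0 (ro_morph W)).
  - by rewrite (complP HU) (joinP F HU (erefl _)) setUCr (ro_morph W).1.
move=> x y z; split.
  move=> /sum_rep [W [U [V [D [HU [HV HUV]]]]]].
  by rewrite (meetP F HU HV) (joinP F HU HV) D (morph0 (ro_morph W)).
case=> Hm ->.
have [W [U [V [T [HU [HV _]]]]]] := rep3 F x y y.
rewrite (meetP F HU HV) -(morph0 (ro_morph W)) in Hm.
rewrite (joinP F HU HV) -HU -HV.
have [Z [q [Aq Hq]]] := equalize F Hm.
have [[q1 [q2 [_ [q4 _]]]] _] := Aq.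
rewrite q1 q4 in Hq.
rewrite -(arrow_g U Aq) -(arrow_g V Aq) -(arrow_g (U :|: V) Aq) q2.
exact: (ro_morph Z).2.
Qed.

End EA.

Section BA.
Variable A : EffectAlgebra.
Local Notation sum := (@ea_sum A).
Local Notation bot := (ea_zero A).
Local Notation top := (ea_one A).
Variables (meet join : A -> A -> A) (compl : A -> A).
Hypothesis HB : is_boolean_algebra meet join compl bot top.
Hypothesis Hs : forall x y z, sum x y = Some z <-> (meet x y = bot /\ z = join x y).

Let mC : forall x y, meet x y = meet y x. Proof. by case: HB. Qed.
Let jC : forall x y, join x y = join y x. Proof. by case: HB => _ []. Qed.
Let mA : forall x y z, meet x (meet y z) = meet (meet x y) z. Proof. by case: HB => _ [_ []]. Qed.
Let jA : forall x y z, join x (join y z) = join (join x y) z. Proof. by case: HB => _ [_ [_ []]]. Qed.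
Let mJ : forall x y, meet x (join x y) = x. Proof. by case: HB => _ [_ [_ [_ []]]]. Qed.
Let jM : forall x y, join x (meet x y) = x. Proof. by case: HB => _ [_ [_ [_ [_ []]]]]. Qed.
Let mD : forall x y z, meet x (join y z) = join (meet x y) (meet x z).
Proof. by case: HB => _ [_ [_ [_ [_ [_ []]]]]]. Qed.
Let j0 : forall x, join x bot = x. Proof. by case: HB => _ [_ [_ [_ [_ [_ [_ []]]]]]]. Qed.
Let m1 : forall x, meet x top = x. Proof. by case: HB => _ [_ [_ [_ [_ [_ [_ [_ []]]]]]]]. Qed.
Let mc : forall x, meet x (compl x) = bot.
Proof. by case: HB => _ [_ [_ [_ [_ [_ [_ [_ [_ []]]]]]]]]. Qed.
Let jc : forall x, join x (compl x) = top.
Proof. by case: HB => _ [_ [_ [_ [_ [_ [_ [_ [_ []]]]]]]]]. Qed.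

Lemma joinxx x : join x x = x.
Proof. by rewrite -{2}(mJ x x) jM. Qed.
Lemma meetxx x : meet x x = x.
Proof. by rewrite -{2}(jM x x) mJ. Qed.
Lemma meetx0 x : meet x bot = bot.
Proof. by rewrite -(mc x) mA meetxx. Qed.
Lemma meet0x x : meet bot x = bot.
Proof. by rewrite mC meetx0. Qed.
Lemma join0x x : join bot x = x.
Proof. by rewrite jC j0. Qed.

Lemma le_antisym x y : join x y = y -> join y x = x -> x = y.
Proof. by move=> H1 H2; rewrite -H2 jC H1. Qed.
Lemma le_trans x y z : join x y = y -> join y z = z -> join x z = z.
Proof. by move=> H1 H2; rewrite -H2 jA H1. Qed.
Lemma le_meet x y : join x y = y -> meet x y = x.
Proof. by move=> H; rewrite -H mJ. Qed.
Lemma meet_le x y : join (meet x y) x = x.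
Proof. by rewrite jC jM. Qed.
Lemma zero_below c a b : join c a = a -> join c b = b -> meet a b = bot -> c = bot.
Proof.
move=> Ha Hb Hab.
by rewrite -(le_meet Ha) -(le_meet Hb) -mA (mC b a) Hab meetx0.
Qed.
Lemma meet4 a b c d : meet (meet a b) (meet c d) = meet (meet a c) (meet b d).
Proof. by rewrite -mA (mA b c d) (mC b c) -(mA c b d) mA. Qed.

Definition bj (J : Type) (s : seq J) (w : J -> A) :=
  foldr (fun j acc => join (w j) acc) bot s.

Lemma bj_ub (J : eqType) (s : seq J) w j : j \in s -> join (w j) (bj s w) = bj s w.
Proof.
elim: s => //= j' s IH; rewrite inE => /orP [/eqP ->|/IH H].
  by rewrite jA joinxx.
by rewrite jA (jC (w j)) -jA H.
Qed.

Lemma bj_lub (J : eqType) (s : seq J) w c :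
  (forall j, j \in s -> join (w j) c = c) -> join (bj s w) c = c.
Proof.
elim: s => [|j s IH] H /=; first by rewrite join0x.
rewrite -jA IH ?H ?mem_head // => j' Hj'; apply: H; by rewrite inE Hj' orbT.
Qed.

Lemma bj_eq (J : eqType) (s1 s2 : seq J) w : s1 =i s2 -> bj s1 w = bj s2 w.
Proof.
move=> E; apply: le_antisym; apply: bj_lub => j Hj; apply: bj_ub; by rewrite ?E // -E.
Qed.

Lemma meet_bj (J : Type) a (s : seq J) w : meet a (bj s w) = bj s (fun j => meet a (w j)).
Proof. by elim: s => [|j s IH] /=; [rewrite meetx0 | rewrite mD IH]. Qed.

Lemma bj_cat (J : Type) (s1 s2 : seq J) w : bj (s1 ++ s2) w = join (bj s1 w) (bj s2 w).
Proof. by elim: s1 => [|j s IH] /=; [rewrite join0x | rewrite IH jA]. Qed.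

Lemma bj0 (J : eqType) (s : seq J) w : (forall j, j \in s -> w j = bot) -> bj s w = bot.
Proof.
elim: s => [|j s IH] H //=; rewrite H ?mem_head // IH ?join0x // => j' Hj'.
by apply: H; rewrite inE Hj' orbT.
Qed.

Definition G (J : finType) (w : J -> A) (S : {set J}) := bj (enum S) w.

Lemma G_U (J : finType) (w : J -> A) X Y : G w (X :|: Y) = join (G w X) (G w Y).
Proof.
by rewrite /G -bj_cat; apply: bj_eq => j; rewrite mem_cat !mem_enum inE.
Qed.

Lemma G_disj (J : finType) (w : J -> A) X Y :
  (forall i j, i != j -> meet (w i) (w j) = bot) -> X :&: Y = set0 ->
  meet (G w X) (G w Y) = bot.
Proof.
move=> Hw D; rewrite mC /G meet_bj; apply: bj0 => i; rewrite mem_enum => Hi.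
rewrite mC meet_bj; apply: bj0 => j; rewrite mem_enum => Hj; apply: Hw.
apply/eqP => E; subst j.
have H : i \in X :&: Y by rewrite inE Hi Hj.
by rewrite D inE in H.
Qed.

Lemma G_morph (n : nat) (w : 'I_n -> A) :
  (forall i j, i != j -> meet (w i) (w j) = bot) -> G w setT = top -> ea_morph (G w).
Proof.
move=> Hw HT; split => // X Y D; apply/Hs; split; first exact: G_disj.
exact: G_U.
Qed.

Section Morph.
Variables (n : nat) (g : {set 'I_n} -> A).
Hypothesis Hg : ea_morph g.

Lemma gdisj (X Y : {set 'I_n}) : X :&: Y = set0 -> meet (g X) (g Y) = bot /\ g (X :|: Y) = join (g X) (g Y).
Proof. by move=> D; apply/Hs; apply: Hg.2. Qed.

Lemma g0 : g set0 = bot.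
Proof.
have [H _] := gdisj (set0I setT); move: H.
by rewrite Hg.1 m1.
Qed.

Lemma g_atoms (P : {set 'I_n}) : g P = bj (enum P) (fun i => g [set i]).
Proof.
have H : forall s : seq 'I_n, uniq s -> g [set x in s] = bj s (fun i => g [set i]).
  elim => [|x s IH] /=.
    by move=> _; rewrite -g0; congr g; apply/setP => y; rewrite !inE.
  case/andP => xs us.
  have -> : [set y in x :: s] = [set x] :|: [set y in s].
    by apply/setP => y; rewrite !inE.
  rewrite (gdisj _).2 ?IH //.
  apply/setP => y; rewrite !inE; apply/negP => /andP [/eqP -> H].
  by rewrite H in xs.
rewrite -H ?enum_uniq //; congr g; apply/setP => x; by rewrite inE mem_enum.
Qed.

Lemma g_le (X Y : {set 'I_n}) : X \subset Y -> join (g X) (g Y) = g Y.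
Proof.
move=> sXY.
have -> : Y = X :|: (Y :\: X).
  apply/setP => j; rewrite !inE; case hX: (j \in X) => //=.
  by rewrite (subsetP sXY _ hX).
rewrite (gdisj _).2; first by rewrite jA joinxx.
by apply/setP => j; rewrite !inE; case: (j \in X); rewrite ?andbF.
Qed.

Lemma g_le_bot (X Y : {set 'I_n}) : X \subset Y -> g Y = bot -> g X = bot.
Proof. by move=> /g_le H E; rewrite E j0 in H. Qed.

Lemma g_union_bot (X Y : {set 'I_n}) : g X = bot -> g Y = bot -> g (X :|: Y) = bot.
Proof.
move=> HX HY.
have -> : X :|: Y = X :|: (Y :\: X).
  by apply/setP => j; rewrite !inE; case: (j \in X).
rewrite (gdisj _).2.
  by rewrite HX (g_le_bot (subsetDl Y X) HY) joinxx.
by apply/setP => j; rewrite !inE; case: (j \in X); rewrite ?andbF.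
Qed.

Lemma restrictE (E : {set 'I_n}) : g (~: E) = bot -> forall S : {set 'I_n}, g S = g (S :&: E).
Proof.
move=> HE S.
have -> : g S = g ((S :&: E) :|: (S :&: ~: E)).
  by congr g; apply/setP => j; rewrite !inE; case: (j \in S); case: (j \in E).
rewrite (gdisj _).2.
  by rewrite (g_le_bot (subsetIr S (~: E)) HE) j0.
by apply/setP => j; rewrite !inE; case: (j \in E); rewrite ?andbF.
Qed.

Lemma sing_disj (i i' : 'I_n) : i != i' -> meet (g [set i]) (g [set i']) = bot.
Proof.
move=> H; apply: (gdisj _).1.
apply/setP => x; rewrite !inE; case: eqP => // ->; exact: negbTE.
Qed.

End Morph.


Lemma coeq (X Y : RObj A) f1 f2 : is_arrow X Y f1 -> is_arrow X Y f2 ->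
  exists (Z : RObj A) q, is_arrow Y Z q /\ (forall S, q (f1 S) = q (f2 S)).
Proof.
move=> A1 A2.
have MY := ro_morph Y.
have [[_ [_ [f1C _]]] H1] := A1.
have [[_ [_ [f2C _]]] H2] := A2.
have [E HE] : exists E : {set 'I_(ro_n Y)},
    forall j, (j \in E) = [forall P, (j \in f1 P) == (j \in f2 P)].
  by exists [set j | [forall P, (j \in f1 P) == (j \in f2 P)]] => j; rewrite inE.
have key : forall P, ro_g (f1 P :&: f2 (~: P)) = bot.
  move=> P; apply: (zero_below (a := ro_g (f1 P)) (b := ro_g (f2 (~: P)))).
  - exact (g_le MY (subsetIl (f1 P) (f2 (~: P)))).
  - exact (g_le MY (subsetIr (f1 P) (f2 (~: P)))).
  - by rewrite H1 H2; apply: (gdisj (ro_morph X) (setICr P)).1.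
have gEc : ro_g (~: E) = bot.
  apply: (g_le_bot MY (Y := \bigcup_(P : {set 'I_(ro_n X)}) (f1 P :&: f2 (~: P)))).
    apply/subsetP => j; rewrite inE HE negb_forall => /existsP [P HP].
    apply/bigcupP.
    case h1 : (j \in f1 P); case h2 : (j \in f2 P); rewrite h1 h2 in HP => //.
      by exists P => //; rewrite inE h1 f2C inE h2.
    by exists (~: P) => //; rewrite inE f1C inE h1 setCK h2.
  apply: (big_ind (fun Z => ro_g Z = bot)).
  - exact: g0 MY.
  - exact: g_union_bot MY.
  - move=> P _; exact: key.
case: (set_0Vmem E) => [E0|[k0 Hk0]].
  have Htb : top = bot by rewrite -MY.1 -gEc E0 setC0.
  have allb : forall x : A, x = bot by move=> x; rewrite -(m1 x) Htb meetx0.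
  have M0 : ea_morph (fun _ : {set 'I_0} => top).
    split => // U V _; apply/Hs; split; first by rewrite meetxx.
    by rewrite joinxx.
  have I0 : forall U V : {set 'I_0}, U = V by move=> U V; apply/setP => [[]].
  exists (Build_RObj M0), (fun _ => set0); split => //.
  split; first by split; [move=> ??|split; [move=> ??|split; [move=> ?|split]]]; apply: I0.
  by move=> S /=; rewrite (allb (ro_g S)) Htb.
pose psi := fun j => if j \in E then j else k0.
exists Y, (fun S : {set 'I_(ro_n Y)} => [set j | psi j \in S]); split.
  split; first exact: preim_morph.
  move=> S; rewrite (restrictE MY gEc) [in RHS](restrictE MY gEc); congr ro_g.
  apply/setP => j; rewrite !inE /psi; case: (j \in E); by rewrite ?andbT ?andbF.
move=> S; apply/setP => j; rewrite !inE.
have : psi j \in E by rewrite /psi; case: ifP.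
by rewrite HE => /forallP /(_ S) /eqP.
Qed.

Lemma side (J : finType) (w : J -> A) n m (ga : {set 'I_n} -> A) (gb : {set 'I_m} -> A)
  (pa : J -> 'I_n) (pb : J -> 'I_m) (mk : 'I_n -> 'I_m -> J) :
  ea_morph ga -> ea_morph gb -> (forall s, w s = meet (ga [set pa s]) (gb [set pb s])) ->
  (forall i j, pa (mk i j) = i /\ pb (mk i j) = j) ->
  forall P : {set 'I_n}, G w [set s | pa s \in P] = ga P.
Proof.
move=> Ma Mb Hw Hmk P; apply: le_antisym.
  apply: bj_lub => s; rewrite mem_enum inE => Hs'.
  apply: (le_trans (y := ga [set pa s])); first by rewrite Hw meet_le.
  by apply: (g_le Ma (X := [set pa s]) (Y := P)); rewrite sub1set.
rewrite (g_atoms Ma P); apply: bj_lub => i; rewrite mem_enum => Hi.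
rewrite -(m1 (ga [set i])) -(Mb.1) (g_atoms Mb setT) meet_bj.
apply: bj_lub => j _.
have [E1 E2] := Hmk i j.
have -> : meet (ga [set i]) (gb [set j]) = w (mk i j) by rewrite Hw E1 E2.
by apply: bj_ub; rewrite mem_enum inE E1.
Qed.

Lemma cosp (Y1 Y2 : RObj A) :
  exists (Z : RObj A) f1 f2, is_arrow Y1 Z f1 /\ is_arrow Y2 Z f2.
Proof.
have M1 := ro_morph Y1; have M2 := ro_morph Y2.
pose I := ('I_(ro_n Y1) * 'I_(ro_n Y2))%type.
pose e := fun s : 'I_#|{: I}| => (enum_val s : I).
pose w := fun s => meet (ro_g [set (e s).1]) (ro_g [set (e s).2]).
have Hw : forall s t, s != t -> meet (w s) (w t) = bot.
  move=> s t Hst.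
  have : e s != e t by rewrite /e (inj_eq enum_val_inj).
  rewrite /w; move: (e s) (e t) => [i j] [i' j'] /=.
  rewrite xpair_eqE negb_and => /orP [Hi|Hj]; rewrite meet4.
    by rewrite (sing_disj M1 Hi) meet0x.
  by rewrite (sing_disj M2 Hj) meetx0.
have side1 : forall P : {set 'I_(ro_n Y1)}, G w [set s | (e s).1 \in P] = ro_g P.
  apply: (side (pa := fun s => (e s).1) (pb := fun s => (e s).2)
      (mk := fun i j => enum_rank (i, j)) M1 M2) => // i j.
  by rewrite /e enum_rankK.
have side2 : forall P : {set 'I_(ro_n Y2)}, G w [set s | (e s).2 \in P] = ro_g P.
  apply: (side (pa := fun s => (e s).2) (pb := fun s => (e s).1)
      (mk := fun i j => enum_rank (j, i)) M2 M1) => [s|i j].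
    by rewrite /w mC.
  by rewrite /e enum_rankK.
have HT : G w setT = top.
  by rewrite -M1.1 -side1; congr G; apply/setP => s; rewrite !inE.
exists (Build_RObj (G_morph Hw HT)), (fun P : {set 'I_(ro_n Y1)} => [set s | (e s).1 \in P]),
  (fun P : {set 'I_(ro_n Y2)} => [set s | (e s).2 \in P]).
split; split; first exact: preim_morph.
- by move=> P; exact: side1.
- exact: preim_morph.
- by move=> P; exact: side2.
Qed.

Lemma filt : intR_filtered A.
Proof. split; [exact: nonempty | split; [exact: cosp | exact: coeq]]. Qed.

End BA.

Theorem mainTheorem4 (A : EffectAlgebra) : is_Boolean A <-> intR_filtered A.
Proof.
split; first by move=> [meet [join [compl [HB Hs]]]]; exact: filt HB Hs.
exact: filt_bool.
Qed.
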